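(* Let $S=\{x_1,\dots,x_N\}$ satisfy A1, and let $\ell$ be differentiable with $\ell'<0$ everywhere. Let $B$ be a uniformly random subset of $S$ of size $b$. Then for every $w\in\mathbb{R}^d$, $$\|\nabla\mathcal{L}(w)\|^2\le\mathbb{E}_B\|\nabla\mathcal{L}_B(w)\|^2\le\frac{N\sigma_{\max}^2}{\gamma^2b}\|\nabla\mathcal{L}(w)\|^2.$$
   Context: Data $x_i\in\mathbb{R}^d$ (labels absorbed). $\mathcal{L}(w)=\frac1N\sum_i\ell(\langle w,x_i\rangle)$ and $\mathcal{L}_B(w)=\frac1b\sum_{x\in B}\ell(\langle w,x\rangle)$. $\sigma_{\max}$ is the spectral norm of the matrix $(x_1,\dots,x_N)$. A1: there is $w$ with $\langle w,x_i\rangle>0$ for all $i$. Max-margin: $\hat w=\arg\min\{\|w\|^2:\langle w,x_i\rangle\ge1\ \forall i\}$ and $\gamma=1/\|\hat w\|$. *)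

(* Defs.v *)
From HB Require Import structures.
From mathcomp Require Import all_boot all_order all_algebra.
From mathcomp Require Import all_classical all_reals.
From mathcomp Require Import topology normedtype derive.
Set Implicit Arguments. Unset Strict Implicit. Unset Printing Implicit Defensive.
Import Order.TTheory GRing.Theory Num.Theory numFieldNormedType.Exports.
Local Open Scope ring_scope.
Local Open Scope classical_set_scope.

Section Defs.
Variables (R : realType) (d N : nat).

Definition dotp (u v : 'rV[R]_d) : R := \sum_(k < d) u 0 k * v 0 k.
Definition enorm (u : 'rV[R]_d) : R := Num.sqrt (dotp u u).

(* A1: linear separability of the (label-absorbed) data. *)
Definition separable (x : 'I_N -> 'rV[R]_d) : Prop :=
  exists w, forall i, 0 < dotp w (x i).

Definition is_max_margin (x : 'I_N -> 'rV[R]_d) (wh : 'rV[R]_d) : Prop :=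
  (forall i, 1 <= dotp wh (x i)) /\
  (forall w, (forall i, 1 <= dotp w (x i)) -> enorm wh ^+ 2 <= enorm w ^+ 2).

(* spectral norm of the d x N matrix (x_1, ..., x_N):
   sup { || sum_i u_i x_i || : u in R^N, ||u|| <= 1 } *)
Definition sigma_max (x : 'I_N -> 'rV[R]_d) : R :=
  sup [set enorm (\sum_i u i *: x i) |
       u in [set u : 'I_N -> R | \sum_i u i ^+ 2 <= 1]].

(* gradient of L(w) = 1/N sum_i l(<w,x_i>) (chain rule) *)
Definition gradL (l : R -> R) (x : 'I_N -> 'rV[R]_d) (w : 'rV[R]_d) : 'rV[R]_d :=
  N%:R^-1 *: \sum_i (derive1 l (dotp w (x i)) *: x i).

(* gradient of L_B(w) = 1/b sum_{i in B} l(<w,x_i>), with b = |B| *)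
Definition gradLB (l : R -> R) (x : 'I_N -> 'rV[R]_d) (B : {set 'I_N})
  (w : 'rV[R]_d) : 'rV[R]_d :=
  (#|B|%:R)^-1 *: \sum_(i in B) (derive1 l (dotp w (x i)) *: x i).

Definition E_subset (b : nat) (f : {set 'I_N} -> R) : R :=
  (#|[set B : {set 'I_N} | #|B| == b]|%:R)^-1 *
  \sum_(B : {set 'I_N} | #|B| == b) f B.

End Defs.

(* Main.v *)
Require Import Defs.
From HB Require Import structures.
From mathcomp Require Import all_boot all_order all_algebra all_fingroup.
From mathcomp Require Import all_classical all_reals.
From mathcomp Require Import topology normedtype derive.
From mathcomp Require Import ring lra.
Import Order.TTheory GRing.Theory Num.Theory numFieldNormedType.Exports.
Local Open Scope ring_scope.
Section H.
Variable R : realType.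

Lemma dotp_ge0 d (u : 'rV[R]_d) : 0 <= dotp u u.
Proof. by apply: sumr_ge0 => k _; rewrite -expr2 sqr_ge0. Qed.

Lemma enorm_sq d (u : 'rV[R]_d) : enorm u ^+ 2 = dotp u u.
Proof. by rewrite /enorm sqr_sqrtr // dotp_ge0. Qed.

Lemma CS_sumP (I : finType) (P : pred I) (a c : I -> R) :
  (\sum_(k | P k) a k * c k) ^+ 2 <= (\sum_(k | P k) a k ^+ 2) * (\sum_(k | P k) c k ^+ 2).
Proof.
set A := \sum_(k | P k) a k ^+ 2; set C := \sum_(k | P k) c k ^+ 2; set Q := \sum_(k | P k) a k * c k.
have C0 : 0 <= C by apply: sumr_ge0 => k _; exact: sqr_ge0.
have [Ce0|Cp] := eqVneq C 0.
  have ck : forall k, P k -> c k = 0.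
    move=> k Pk; apply/eqP; rewrite -sqrf_eq0 eq_le sqr_ge0 andbT.
    rewrite -Ce0 /C (bigD1 k) //= lerDl; apply: sumr_ge0 => j _; exact: sqr_ge0.
  rewrite /Q big1; last by move=> k Pk; rewrite ck ?mulr0.
  by rewrite Ce0 mulr0 expr0n.
have Cpos : 0 < C by rewrite lt_def Cp C0.
have H : 0 <= \sum_(k | P k) (C * a k - Q * c k) ^+ 2 by apply: sumr_ge0 => k _; exact: sqr_ge0.
have E : \sum_(k | P k) (C * a k - Q * c k) ^+ 2 = C * (C * A - Q ^+ 2).
  rewrite (eq_bigr (fun k => C ^+ 2 * a k ^+ 2 - (2 * C * Q) * (a k * c k) + Q ^+ 2 * c k ^+ 2)); last first.
    by move=> k _; ring.
  rewrite !big_split /= sumrN -!mulr_sumr -/A -/Q -/C; ring.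
rewrite E pmulr_rge0 // in H.
by rewrite mulrC -subr_ge0.
Qed.
End H.
Section C.
Variable R : realType.
Variables (N b : nat).

Definition Sb (i : 'I_N) := [set B : {set 'I_N} | (#|B| == b) && (i \in B)].

Lemma Sb_card (i j : 'I_N) : #|Sb i| = #|Sb j|.
Proof.
pose h := fun B : {set 'I_N} => tperm i j @^-1: B.
have hK : involutive h by move=> B; apply/setP => z; rewrite !inE tpermK.
have -> : Sb j = h @^-1: Sb i.
  apply/setP => C; rewrite !inE /h card_preimset; last exact: perm_inj.

  by rewrite tpermL.
by rewrite card_preimset //; exact: inv_inj.
Qed.

Lemma mean_gen (a : 'I_N -> R) :
  \sum_(B : {set 'I_N} | #|B| == b) \sum_(i in B) a i = \sum_i a i * (#|Sb i|%:R).
Proof.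
under eq_bigr => B _ do rewrite big_mkcond.
rewrite exchange_big /=; apply: eq_bigr => i _.
rewrite -sum1_card natr_sum mulr_sumr big_mkcond [RHS]big_mkcond /=.
apply: eq_bigr => B _; rewrite !inE.
by case: (#|B| == b); case: (i \in B); rewrite /= ?mulr1.
Qed.

End C.
Section S.
Variable R : realType.
Variables (d N : nat) (x : 'I_N -> 'rV[R]_d).

Lemma dotp_ge0' (u : 'rV[R]_d) : 0 <= dotp u u.
Proof. by apply: sumr_ge0 => k _; rewrite -expr2 sqr_ge0. Qed.

Lemma combE (u : 'I_N -> R) k : (\sum_i u i *: x i) 0 k = \sum_i u i * x i 0 k.
Proof. by rewrite summxE; apply: eq_bigr => i _; rewrite mxE. Qed.

Lemma dotpZ (t : R) (v : 'rV[R]_d) : dotp (t *: v) (t *: v) = t ^+ 2 * dotp v v.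
Proof. rewrite /dotp mulr_sumr; apply: eq_bigr => k _; rewrite !mxE; ring. Qed.

Lemma sigma_hassup :
  has_sup [set enorm (\sum_i u i *: x i) |
       u in [set u : 'I_N -> R | \sum_i u i ^+ 2 <= 1]].
Proof.
split.
  by exists (enorm (\sum_i (fun _ => 0 : R) i *: x i)); exists (fun _ => 0) => //=;
    rewrite big1 // => i _; rewrite expr0n.
exists (Num.sqrt (\sum_k (\sum_i `|x i 0 k|) ^+ 2)) => _ [u /= hu <-].
rewrite /enorm ler_sqrt; last by apply: sumr_ge0 => k _; exact: sqr_ge0.
rewrite /dotp; apply: ler_sum => k _; rewrite -expr2 -real_normK ?num_real //.
rewrite ler_sqr ?nnegrE ?normr_ge0 //; last by apply: sumr_ge0 => i _.
rewrite combE; apply: le_trans (ler_norm_sum _ _ _) _; apply: ler_sum => i _.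
rewrite normrM ler_piMl //.
have : u i ^+ 2 <= 1.
  apply: le_trans hu; rewrite (bigD1 i) //= lerDl; apply: sumr_ge0 => j _; exact: sqr_ge0.
by rewrite -real_normK ?num_real // expr_le1.
Qed.

Lemma sigma_bound (u : 'I_N -> R) :
  dotp (\sum_i u i *: x i) (\sum_i u i *: x i) <= sigma_max x ^+ 2 * \sum_i u i ^+ 2.
Proof.
set s := \sum_i u i ^+ 2; set V := \sum_i u i *: x i.
have s0 : 0 <= s by apply: sumr_ge0 => i _; exact: sqr_ge0.
have [se0|sp] := eqVneq s 0.
  have ui : forall i, u i = 0.
    move=> i; apply/eqP; rewrite -sqrf_eq0 eq_le sqr_ge0 andbT.
    rewrite -se0 /s (bigD1 i) //= lerDl; apply: sumr_ge0 => j _; exact: sqr_ge0.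
  have -> : V = 0 by rewrite /V big1 // => i _; rewrite ui scale0r.
  rewrite se0 mulr0 /dotp big1 // => k _; by rewrite mxE mul0r.

have spos : 0 < s by rewrite lt_def sp s0.
set t := Num.sqrt s.
have tpos : 0 < t by rewrite sqrtr_gt0.
have t2 : t ^+ 2 = s by rewrite sqr_sqrtr.
pose u' := fun i => u i / t.
have hu' : \sum_i u' i ^+ 2 <= 1.
  rewrite (eq_bigr (fun i => u i ^+ 2 / t ^+ 2)); last by move=> i _; rewrite /u' expr_div_n.
  by rewrite -mulr_suml t2 -/s divff.
have := sup_upper_bound sigma_hassup (ex_intro2 _ _ u' hu' erefl).
rewrite -/(sigma_max x).
have -> : \sum_i u' i *: x i = t^-1 *: V.
  rewrite /V scaler_sumr; apply: eq_bigr => i _; by rewrite scalerA mulrC.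
rewrite /enorm dotpZ => H.
have sig0 : 0 <= sigma_max x by apply: le_trans H; exact: sqrtr_ge0.
have : t^-1 ^+ 2 * dotp V V <= sigma_max x ^+ 2.
  rewrite -(sqr_sqrtr (a := _ * _)); last by rewrite mulr_ge0 ?sqr_ge0 ?dotp_ge0'.
  by rewrite ler_sqr ?nnegrE ?sqrtr_ge0.
rewrite exprVn -t2 ler_pdivrMl ?exprn_gt0 // => H2.
by rewrite mulrC.
Qed.
End S.
Section M.
Variable R : realType.
Variables (N b : nat).

Lemma sumr_constI (c : R) : \sum_(i < N) c = N%:R * c.
Proof. by rewrite sumr_const card_ord mulr_natl. Qed.

Lemma count_eq (i : 'I_N) :
  N%:R * (#|Sb N b i|%:R : R) = b%:R * #|[set B : {set 'I_N} | #|B| == b]|%:R.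
Proof.
have := mean_gen R N b (fun _ => 1).
under eq_bigr => B /eqP hB do rewrite sumr_const hB.
under [in X in _ = X -> _]eq_bigr => j _ do rewrite mul1r (Sb_card N b j i).
rewrite sumr_constI => <-.
rewrite -sum1_card natr_sum mulr_sumr.
by apply: eq_big => [B|B _]; rewrite ?inE ?mulr1.
Qed.

Lemma mean (hN : (0 < N)%N) (a : 'I_N -> R) :
  \sum_(B : {set 'I_N} | #|B| == b) \sum_(i in B) a i =
  (b%:R * #|[set B : {set 'I_N} | #|B| == b]|%:R / N%:R) * \sum_i a i.
Proof.
rewrite mean_gen.
have N0 : (N%:R : R) != 0 by rewrite pnatr_eq0 -lt0n.
rewrite mulr_sumr; apply: eq_bigr => i _.
rewrite -(count_eq i) mulrC; congr (_ * _).
by rewrite mulrC mulKf.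
Qed.

Lemma sumsq_le (I : finType) (a : I -> R) : (forall i, 0 <= a i) ->
  \sum_i a i ^+ 2 <= (\sum_i a i) ^+ 2.
Proof.
move=> a0; rewrite expr2 mulr_suml; apply: ler_sum => i _.
rewrite expr2 ler_wpM2l // (bigD1 i) //= lerDl; exact: sumr_ge0.
Qed.
Lemma cardEq : #|[set B : {set 'I_N} | #|B| == b]%classic| = #|[set B : {set 'I_N} | #|B| == b]|.
Proof. apply: eq_card => B. rewrite inE. apply/idP/idP; rewrite in_setE //. Qed.
End M.
Theorem mainTheorem14 (R : realType) (d N b : nat)
  (x : 'I_N -> 'rV[R]_d) (l : R -> R) (wh : 'rV[R]_d)
  (hA1 : separable x)
  (hdiff : forall t : R, derivable l t 1)
  (hneg : forall t : R, derive1 l t < 0)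
  (hb : (0 < b)%N) (hbN : (b <= N)%N)
  (hwh : is_max_margin x wh) :
  let gamma := (enorm wh)^-1 in
  forall w : 'rV[R]_d,
    enorm (gradL l x w) ^+ 2 <= E_subset b (fun B => enorm (gradLB l x B w) ^+ 2)
    /\ E_subset b (fun B => enorm (gradLB l x B w) ^+ 2)
       <= (N%:R * sigma_max x ^+ 2) / (gamma ^+ 2 * b%:R) * enorm (gradL l x w) ^+ 2.
Proof.
move=> gamma w.
have hN : (0 < N)%N by apply: leq_trans hbN.
set M := #|[set B : {set 'I_N} | #|B| == b]|.
have Mpos : (0 < M)%N by rewrite /M card_draws card_ord bin_gt0.
have M0 : (M%:R : R) != 0 by rewrite pnatr_eq0 -lt0n.
have N0 : (N%:R : R) != 0 by rewrite pnatr_eq0 -lt0n.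
have b0 : (b%:R : R) != 0 by rewrite pnatr_eq0 -lt0n.
set c := fun i => derive1 l (dotp w (x i)).
set G := gradL l x w.
have GE : forall k, G 0 k = N%:R^-1 * \sum_i c i * x i 0 k.
  by move=> k; rewrite /G /gradL mxE (@combE R d N x c).
have YE : forall B : {set 'I_N}, #|B| == b -> forall k,
    gradLB l x B w 0 k = b%:R^-1 * \sum_(i in B) c i * x i 0 k.
  move=> B hB k; rewrite /gradLB (eqP hB) mxE summxE; congr (_ * _).
  by apply: eq_bigr => i _; rewrite mxE.
have cM : \sum_(B : {set 'I_N} | #|B| == b) (1:R) ^+ 2 = M%:R.
  rewrite /M -sum1_card natr_sum; apply: eq_big => [B|B _]; by rewrite ?inE ?expr1n.
have Jensen : forall f : {set 'I_N} -> R,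
    (M%:R^-1 * \sum_(B : {set 'I_N} | #|B| == b) f B) ^+ 2
      <= M%:R^-1 * \sum_(B : {set 'I_N} | #|B| == b) f B ^+ 2.
  move=> f; have := @CS_sumP R _ (fun B : {set 'I_N} => #|B| == b) (fun _ => 1) f.
  have -> : \sum_(B : {set 'I_N} | #|B| == b) 1 * f B = \sum_(B : {set 'I_N} | #|B| == b) f B.
    by apply: eq_bigr => B _; rewrite mul1r.
  rewrite cM => H.
  apply: (le_trans (y := M%:R^-1 ^+ 2 * (M%:R * \sum_(B : {set 'I_N} | #|B| == b) f B ^+ 2))).
    by rewrite exprMn ler_wpM2l ?sqr_ge0.
  rewrite (_ : M%:R^-1 ^+ 2 * (M%:R * _) = M%:R^-1 * \sum_(B : {set 'I_N} | #|B| == b) f B ^+ 2) //.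
  by field.
split.
  rewrite enorm_sq /E_subset cardEq -/M.
  under eq_bigr => B hB do rewrite enorm_sq.
  rewrite /dotp exchange_big mulr_sumr; apply: ler_sum => k _.
  have -> : G 0 k = M%:R^-1 * \sum_(B : {set 'I_N} | #|B| == b) gradLB l x B w 0 k.
    under eq_bigr => B hB do rewrite (YE B hB).
    rewrite -mulr_sumr (mean R N b hN) GE -/M.
    by field; rewrite N0 b0 M0.
  rewrite -expr2; apply: le_trans (Jensen _) _.
  by rewrite ler_wpM2l ?invr_ge0 ?ler0n //; apply/ler_sum => B _; rewrite expr2.
set D := dotp wh wh.
have i0 : 'I_N := Ordinal hN.
have Dpos : 0 < D.
  rewrite lt_def dotp_ge0 andbT; apply/negP => /eqP D0.
  have whk : forall k, wh 0 k = 0.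
    move=> k; apply/eqP; rewrite -sqrf_eq0 eq_le sqr_ge0 andbT.
    rewrite -D0 /D /dotp (bigD1 k) //= expr2 lerDl.
    by apply: sumr_ge0 => j _; rewrite -expr2 sqr_ge0.
  move: (hwh.1 i0); rewrite /dotp big1 => [|k _]; first by rewrite ler10.
  by rewrite whk mul0r.
have gam2 : gamma ^+ 2 = D^-1 by rewrite /gamma exprVn enorm_sq.
have cneg : forall i, 0 <= - c i by move=> i; rewrite oppr_ge0 ltW // hneg.
have dG : dotp wh G = N%:R^-1 * \sum_i c i * dotp wh (x i).
  rewrite /dotp; under eq_bigr => k _ do rewrite GE mulrCA.
  rewrite -mulr_sumr; congr (_ * _).
  under eq_bigr => k _ do rewrite mulr_sumr.
  rewrite exchange_big; apply: eq_bigr => i _; rewrite mulr_sumr.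
  by apply: eq_bigr => k _; ring.
have S1 : \sum_i - c i <= - (N%:R * dotp wh G).
  rewrite dG mulrA mulfV // mul1r -sumrN; apply: ler_sum => i _.
  rewrite -mulNr -{1}[- c i]mulr1 ler_wpM2l //; exact: hwh.1 i.
have S0 : 0 <= \sum_i - c i by apply: sumr_ge0.
have key : \sum_i c i ^+ 2 <= N%:R ^+ 2 * D * dotp G G.
  have -> : \sum_i c i ^+ 2 = \sum_i (- c i) ^+ 2 by apply: eq_bigr => i _; rewrite sqrrN.
  apply: le_trans (@sumsq_le R _ (fun i => - c i) cneg) _.
  apply: (le_trans (y := (- (N%:R * dotp wh G)) ^+ 2)).
    by rewrite ler_sqr ?nnegrE //; apply: le_trans S1.
  rewrite sqrrN exprMn -mulrA ler_wpM2l ?sqr_ge0 //.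
  have := @CS_sumP R _ xpredT (fun k => wh 0 k) (fun k => G 0 k).
  by [].
rewrite /E_subset cardEq -/M.
have step : forall B : {set 'I_N}, #|B| == b -> enorm (gradLB l x B w) ^+ 2 <=
    b%:R^-1 ^+ 2 * (sigma_max x ^+ 2 * \sum_(i in B) c i ^+ 2).
  move=> B hB; rewrite enorm_sq.
  have -> : gradLB l x B w = b%:R^-1 *: \sum_i (if i \in B then c i else 0) *: x i.
    rewrite /gradLB (eqP hB) big_mkcond; congr (_ *: _).
    by apply: eq_bigr => i _; case: (i \in B); rewrite ?scale0r.
  rewrite dotpZ ler_wpM2l ?sqr_ge0 //.
  have -> : \sum_(i in B) c i ^+ 2 = \sum_i (if i \in B then c i else 0) ^+ 2.
    by rewrite big_mkcond; apply: eq_bigr => i _; case: (i \in B); rewrite ?expr0n.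
  exact: sigma_bound.
apply: (le_trans (y := M%:R^-1 * \sum_(B : {set 'I_N} | #|B| == b)
    b%:R^-1 ^+ 2 * (sigma_max x ^+ 2 * \sum_(i in B) c i ^+ 2))).
  by rewrite ler_wpM2l ?invr_ge0 ?ler0n //; apply: ler_sum.
rewrite -mulr_sumr -mulr_sumr (mean R N b hN) -/M gam2 enorm_sq.
apply: (le_trans (y := sigma_max x ^+ 2 / (b%:R * N%:R) * (N%:R ^+ 2 * D * dotp G G))).
  rewrite (_ : M%:R^-1 * _ = sigma_max x ^+ 2 / (b%:R * N%:R) * \sum_i c i ^+ 2).
    by rewrite ler_wpM2l // mulr_ge0 ?sqr_ge0 // invr_ge0 mulr_ge0 ?ler0n.
  by field; rewrite N0 b0 M0.
rewrite le_eqVlt; apply/orP; left; apply/eqP.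
by field; rewrite N0 b0 (gt_eqF Dpos).
Qed.
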